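(* Let $\nu_0=\mathcal N(0,\tau_0^{-2})$ and $\nu_1=\mathcal N(0,\tau_1^{-2})$ (identified with their densities on $\mathbb{R}$) with $0<\tau_1^2<\tau_0^2$, let $\eta\in[0,1)$, and define $\xi(x)=-\log\big(\eta\,\nu_0(x)+(1-\eta)\,\nu_1(x)\big)$. Then for all $x\in\mathbb{R}$, $$\xi''(x)\ge\tau_1^2-2(\tau_0^2-\tau_1^2)\log\Big(1+\frac{\eta\tau_0}{(1-\eta)e\tau_1}\Big).$$ *)

(* Defs.v *)
From Stdlib Require Import Reals.
From Coquelicot Require Import Coquelicot.
Open Scope R_scope.

Definition normal_density (tau x : R) : R :=
  tau / sqrt (2 * PI) * exp (- (tau ^ 2 * x ^ 2) / 2).

Definition xi (eta tau0 tau1 : R) (x : R) : R :=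
  - ln (eta * normal_density tau0 x + (1 - eta) * normal_density tau1 x).

(* Main.v *)
Require Import Defs.
From Stdlib Require Import Reals Lra.
From Coquelicot Require Import Coquelicot.
Open Scope R_scope.

Lemma nd_pos tau x : 0 < tau -> 0 < normal_density tau x.
Proof.
  intros h. unfold normal_density. apply Rmult_lt_0_compat; [|apply exp_pos].
  apply Rdiv_lt_0_compat; auto. apply sqrt_lt_R0. pose proof PI_RGT_0. lra.
Qed.

Lemma nd_deriv tau x :
  is_derive (normal_density tau) x (-(tau^2*x) * normal_density tau x).
Proof.
  unfold normal_density. auto_derive; [auto|]. replace (- (tau * (tau * 1) * (x * (x * 1))) * / 2) with (-(tau^2*x^2)/2) by (unfold Rdiv; ring). set (E := exp _). set (S := sqrt _). simpl. unfold Rdiv; lra.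
Qed.

Lemma exp_cvx l u : 0 <= l <= 1 -> exp (l*u) <= 1 - l + l * exp u.
Proof.
  intros [h0 h1].
  pose proof (exp_ineq1_le (u - l*u)) as e1.
  pose proof (exp_ineq1_le (- (l*u))) as e2.
  assert (E1 : exp u = exp (l*u) * exp (u - l*u)) by (rewrite <- exp_plus; f_equal; ring).
  assert (E2 : 1 = exp (l*u) * exp (- (l*u))) by (rewrite <- exp_plus; replace (l*u + -(l*u)) with 0 by ring; now rewrite exp_0).
  pose proof (exp_pos (l*u)) as p.
  assert (l * exp (l*u) * (1 + (u - l*u)) <= l * exp u).
  { rewrite E1. rewrite Rmult_assoc. apply Rmult_le_compat_l; auto.
    apply Rmult_le_compat_l; lra. }
  assert ((1-l) * exp (l*u) * (1 + - (l*u)) <= (1-l)).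
  { apply Rle_trans with ((1-l) * exp (l*u) * exp (- (l*u))).
    rewrite Rmult_assoc, (Rmult_assoc (1-l)). apply Rmult_le_compat_l; [lra|].
    apply Rmult_le_compat_l; lra. rewrite Rmult_assoc, <- E2. lra. }
  nra.
Qed.

Lemma key s t : 0 <= s -> t * s / (1+s) <= ln (1 + s * exp (t-1)).
Proof.
  intros hs.
  set (l := s/(1+s)).
  assert (hl : 0 <= l <= 1).
  { unfold l; split. apply Rdiv_le_0_compat; lra.
    apply Rmult_le_reg_r with (1+s); [lra|]. unfold Rdiv. rewrite Rmult_assoc, Rinv_l; lra. }
  assert (hl2 : 1 - l = / (1+s)) by (unfold l; field; lra).
  pose proof (exp_cvx l (t-1) hl) as c.
  assert (c2 : exp l <= 1 + s).
  { pose proof (exp_ineq1_le (-l)) as e.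
    assert (exp l * exp (-l) = 1) by (rewrite <- exp_plus; replace (l + -l) with 0 by ring; apply exp_0).
    assert (1 - l <= exp (-l)) by lra.
    pose proof (exp_pos l). rewrite hl2 in H0.
    apply Rmult_le_reg_r with (/(1+s)). apply Rinv_0_lt_compat; lra.
    rewrite Rinv_r by lra. nra. }
  assert (exp (t*s/(1+s)) <= 1 + s * exp (t-1)).
  { replace (t*s/(1+s)) with (l + l*(t-1)) by (unfold l; field; lra).
    rewrite exp_plus.
    pose proof (exp_pos l). pose proof (exp_pos (l*(t-1))).
    apply Rle_trans with ((1+s) * (1 - l + l * exp (t-1))).
    - apply Rmult_le_compat; lra.
    - rewrite hl2. unfold l. right. field. lra. }
  rewrite <- (ln_exp (t*s/(1+s))). apply ln_le; auto. apply exp_pos.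
Qed.

Definition mix tau0 tau1 c0 c1 y := c0 * normal_density tau0 y + c1 * normal_density tau1 y.

Lemma plusR (a b : R) : plus a b = a + b. Proof. reflexivity. Qed.
Lemma oppR (a : R) : opp a = - a. Proof. reflexivity. Qed.
Lemma scalR (a b : R) : scal a b = a * b. Proof. reflexivity. Qed.
Lemma multR (a b : R) : mult a b = a * b. Proof. reflexivity. Qed.

Lemma is_derive_eq (f : R -> R) (x l l' : R) : is_derive f x l -> l = l' -> is_derive f x l'.
Proof. intros h e; subst; auto. Qed.

Lemma mix_deriv tau0 tau1 c0 c1 y :
  is_derive (mix tau0 tau1 c0 c1) y (-(y * mix tau0 tau1 (c0*tau0^2) (c1*tau1^2) y)).
Proof.
  unfold mix. eapply is_derive_eq.
  apply (is_derive_plus (fun y => c0 * normal_density tau0 y) (fun y => c1 * normal_density tau1 y));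
   apply is_derive_scal; apply nd_deriv.
  rewrite plusR. unfold mix. ring.
Qed.

Lemma mix_pos tau0 tau1 eta y : 0 < tau0 -> 0 < tau1 -> 0 <= eta < 1 ->
  0 < mix tau0 tau1 eta (1-eta) y.
Proof.
  intros h0 h1 he. unfold mix. pose proof (nd_pos tau0 y h0). pose proof (nd_pos tau1 y h1).
  assert (0 <= eta * normal_density tau0 y) by (apply Rmult_le_pos; lra).
  assert (0 < (1-eta) * normal_density tau1 y) by (apply Rmult_lt_0_compat; lra).
  lra.
Qed.

Lemma xi_deriv tau0 tau1 eta y : 0 < tau0 -> 0 < tau1 -> 0 <= eta < 1 ->
  is_derive (xi eta tau0 tau1) y
    (y * mix tau0 tau1 (eta*tau0^2) ((1-eta)*tau1^2) y / mix tau0 tau1 eta (1-eta) y).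
Proof.
  intros h0 h1 he. pose proof (mix_pos tau0 tau1 eta y h0 h1 he).
  apply is_derive_ext with (fun y => opp (ln (mix tau0 tau1 eta (1-eta) y))).
  { intros t. unfold xi. now rewrite oppR. }
  eapply is_derive_eq.
  apply (is_derive_opp (fun y0 : R => ln (mix tau0 tau1 eta (1 - eta) y0)) y).
  apply (is_derive_comp ln (mix tau0 tau1 eta (1-eta))).
  apply is_derive_ln; auto. apply mix_deriv.
  rewrite oppR, scalR. field. lra.
Qed.

Lemma Dxi_eq tau0 tau1 eta : 0 < tau0 -> 0 < tau1 -> 0 <= eta < 1 ->
  forall y, Derive (xi eta tau0 tau1) y =
    y * mix tau0 tau1 (eta*tau0^2) ((1-eta)*tau1^2) y / mix tau0 tau1 eta (1-eta) y.
Proof. intros; apply is_derive_unique, xi_deriv; auto. Qed.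

Lemma D2_deriv tau0 tau1 eta y : 0 < tau0 -> 0 < tau1 -> 0 <= eta < 1 ->
  is_derive (fun y => y * mix tau0 tau1 (eta*tau0^2) ((1-eta)*tau1^2) y / mix tau0 tau1 eta (1-eta) y) y
   (((1 * mix tau0 tau1 (eta*tau0^2) ((1-eta)*tau1^2) y
      + y * (-(y * mix tau0 tau1 (eta*tau0^2*tau0^2) ((1-eta)*tau1^2*tau1^2) y)))
     * mix tau0 tau1 eta (1-eta) y
     - y * mix tau0 tau1 (eta*tau0^2) ((1-eta)*tau1^2) y * (-(y * mix tau0 tau1 (eta*tau0^2) ((1-eta)*tau1^2) y)))
    / (mix tau0 tau1 eta (1-eta) y)^2).
Proof.
  intros h0 h1 he. pose proof (mix_pos tau0 tau1 eta y h0 h1 he).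
  apply (is_derive_div (fun y => y * mix tau0 tau1 (eta*tau0^2) ((1-eta)*tau1^2) y)).
  2: apply mix_deriv.
  2: lra.
  eapply is_derive_eq.
  apply (is_derive_mult (fun y : R => y) (mix tau0 tau1 (eta*tau0^2) ((1-eta)*tau1^2)) y).
  apply is_derive_id. apply mix_deriv.
  intros; apply Rmult_comm.
  rewrite plusR. reflexivity.
Qed.

Lemma core D A B t : 0 < D -> 0 <= A -> 0 < B -> 0 <= t ->
  D*A/(A+B) - 2*t*D*A*B/(A+B)^2 >= -2*D*ln(1 + A/B*exp(t-1)).
Proof.
  intros hD hA hB ht.
  assert (hs : 0 <= A/B) by (apply Rdiv_le_0_compat; lra).
  pose proof (key (A/B) t hs) as k.
  replace (t * (A/B) / (1 + A/B)) with (t*A/(A+B)) in k by (field; lra).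
  assert (e1 : 0 <= D*A/(A+B)) by (apply Rdiv_le_0_compat; nra).
  assert (e2 : t*D*A*B/(A+B)^2 <= D * (t*A/(A+B))).
  { replace (t*D*A*B/(A+B)^2) with (D * (t*A/(A+B)) * (B/(A+B))) by (field; lra).
    assert (0 <= D * (t*A/(A+B))) by (apply Rmult_le_pos; [lra|apply Rdiv_le_0_compat; nra]).
    assert (B/(A+B) <= 1) by (apply Rmult_le_reg_r with (A+B); [lra|]; unfold Rdiv; rewrite Rmult_assoc, Rinv_l; lra).
    nra. }
  assert (e3 : D * (t*A/(A+B)) <= D * ln (1 + A/B*exp(t-1))) by (apply Rmult_le_compat_l; lra).
  lra.
Qed.

Theorem mainTheorem11 (tau0 tau1 eta : R)
  (htau1 : 0 < tau1) (htau : tau1 < tau0)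
  (heta0 : 0 <= eta) (heta1 : eta < 1) :
  forall x : R,
    Derive_n (xi eta tau0 tau1) 2 x >=
      tau1 ^ 2 - 2 * (tau0 ^ 2 - tau1 ^ 2)
        * ln (1 + eta * tau0 / ((1 - eta) * exp 1 * tau1)).
Proof.
  intros x.
  assert (h0 : 0 < tau0) by lra. assert (he : 0 <= eta < 1) by lra.
  change (Derive (Derive (xi eta tau0 tau1)) x >=
      tau1 ^ 2 - 2 * (tau0 ^ 2 - tau1 ^ 2)
        * ln (1 + eta * tau0 / ((1 - eta) * exp 1 * tau1))).
  rewrite (Derive_ext _ _ x (Dxi_eq tau0 tau1 eta h0 htau1 he)).
  pose proof (is_derive_unique _ _ _ (D2_deriv tau0 tau1 eta x h0 htau1 he)) as HU.
  simpl in HU |- *. rewrite HU. clear HU.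
  unfold mix.
  pose proof (nd_pos tau0 x h0) as p0. pose proof (nd_pos tau1 x htau1) as p1.
  set (n0 := normal_density tau0 x) in *. set (n1 := normal_density tau1 x) in *.
  set (D := tau0^2 - tau1^2).
  set (t := D * x^2 / 2).
  assert (hB : 0 < (1-eta)*n1) by (apply Rmult_lt_0_compat; lra).
  assert (hA : 0 <= eta*n0) by (apply Rmult_le_pos; lra).
  assert (hD : 0 < D) by (unfold D; nra).
  assert (ht : 0 <= t) by (unfold t; apply Rdiv_le_0_compat; [apply Rmult_le_pos; [lra| nra]|lra]).
  assert (rel : eta*n0/((1-eta)*n1) * exp (t-1) = eta * tau0 / ((1 - eta) * exp 1 * tau1)).
  { unfold n0, n1, normal_density.
    assert (E : exp (- (tau0 ^ 2 * x ^ 2) / 2) * exp (t-1) = exp (- (tau1 ^ 2 * x ^ 2) / 2) * / exp 1).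
    { rewrite <- exp_Ropp, <- !exp_plus. f_equal. unfold t, D. field. }
    assert (0 < sqrt (2*PI)) by (apply sqrt_lt_R0; pose proof PI_RGT_0; lra).
    pose proof (exp_pos (- (tau1 ^ 2 * x ^ 2) / 2)). pose proof (exp_pos 1).
    replace (eta * (tau0 / sqrt (2 * PI) * exp (- (tau0 ^ 2 * x ^ 2) / 2)) /
     ((1 - eta) * (tau1 / sqrt (2 * PI) * exp (- (tau1 ^ 2 * x ^ 2) / 2))) * exp (t - 1))
     with (eta * tau0 / ((1-eta) * tau1 * exp (- (tau1 ^ 2 * x ^ 2) / 2)) *
            (exp (- (tau0 ^ 2 * x ^ 2) / 2) * exp (t-1))) by (field; repeat split; lra).
    rewrite E. field. repeat split; lra. }
  rewrite <- rel.
  pose proof (core D (eta*n0) ((1-eta)*n1) t hD hA hB ht) as c.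
  match goal with |- ?V >= _ => replace V with
    (tau1^2 + (D*(eta*n0)/(eta*n0+(1-eta)*n1) - 2*t*D*(eta*n0)*((1-eta)*n1)/(eta*n0+(1-eta)*n1)^2)) end.
  replace (tau0 * (tau0*1) - tau1*(tau1*1)) with D by (unfold D; ring). replace (tau1 * (tau1 * 1)) with (tau1^2) by ring. lra.
  unfold t, D. field. lra.
Qed.
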